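(* Let $g\ge2$, $n\ge1$ and $d\in\mathbb Z$. For $j=2,\dots,n$ let $T_j$ and let $S$ be the operators on degree $d$ universal stability conditions of type $(g,n)$ given by $T_j(\mathfrak m)_{(e,h,A)}=\mathfrak m_{(e,h,A)}+1$ if $1\in A,j\notin A$; $=\mathfrak m_{(e,h,A)}-1$ if $1\notin A, j\in A$; $=\mathfrak m_{(e,h,A)}$ otherwise; and $S(\mathfrak m)_{(e,h,A)}=\mathfrak m_{(e,h,A)}+2g-2h-e$ if $1\in A$, $=\mathfrak m_{(e,h,A)}-(2h+e-2)$ if $1\notin A$. These operators (which correspond to tensoring the associated Jacobian with $\mathcal O(\Sigma_1-\Sigma_j)$ and $\mathcal O((2g-2)\Sigma_1)\otimes\omega_\pi^{-1}$ respectively) generate a group action on the set of degree $d$ universal stability conditions of type $(g,n)$, and every orbit of this action contains exactly one $\mathfrak m$ satisfying $\mathfrak m_{(2,0,\{1\})}\in\{0,1,\dots,2g-3\}$ and $\mathfrak m_{(2,0,\{i\})}=0$ for all $i\in\{2,\dots,n\}$.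
   Context: Fix $g\ge2$, $n\ge1$, $[n]=\{1,\dots,n\}$. The vine graph $V(e,h,A)$ has two vertices $v_1,v_2$ joined by $e$ edges, no loops, with vertex genera $g(v_1)=h$, $g(v_2)=g+1-e-h$ and markings $A$ at $v_1$, $[n]\setminus A$ at $v_2$; it is stable if $2h-2+e+|A|>0$ and $2(g+1-e-h)-2+e+n-|A|>0$. $\mathcal D_{g,n}$ is the set of triples $(e,h,A)$ with $e\ge1$, $h\ge0$, $g+1-e-h\ge0$, $A\subseteq[n]$ and $V(e,h,A)$ stable. A degree $d$ universal stability condition of type $(g,n)$ is a family of integers $(\mathfrak m_{(e,h,A)})_{(e,h,A)\in\mathcal D_{g,n}}$ such that (i) $\mathfrak m_{(e,h,A)}+\mathfrak m_{(e,g+1-e-h,[n]\setminus A)}=d+1-e$ for all $(e,h,A)$, and (ii) $0\le \mathfrak m_{(e,h,A)}-h-(\mathfrak m_{(e',h',A')}-h')-(\mathfrak m_{(e'',h'',A'')}-h'')\le1$ whenever $A=A'\sqcup A''$, $2(h+1-h'-h'')=e'+e''-e$, and $e<e'+e''$, $e'<e+e''$, $e''<e+e'$. *)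

(* Defs.v *)
From mathcomp Require Import all_boot all_order all_algebra.
From Stdlib Require Import Relations.
Unset Printing Implicit Defensive.
Import Order.TTheory GRing.Theory Num.Theory.
Local Open Scope ring_scope.

(* Markings [n] = {1,...,n} are represented by 'I_n : the marking k+1
   corresponds to the ordinal with value k.  So marking 1 is the ordinal
   of value 0, and markings 2..n are the ordinals j with 1 <= val j. *)

Definition has1 (n : nat) (A : {set 'I_n}) : bool :=
  [exists i in A, val i == 0%N].

Definition set_one (n : nat) : {set 'I_n} := [set i | val i == 0%N].

(* A family indexed by triples (e,h,A): values outside D_{g,n} are
   irrelevant and normalised to 0. *)
Definition family (n : nat) := nat -> nat -> {set 'I_n} -> int.

Definition inD (g n : nat) (e h : nat) (A : {set 'I_n}) : bool :=
  [&& (1 <= e)%N, (e + h <= g + 1)%N,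
      (0 < 2 * h%:Z - 2 + e%:Z + #|A|%:Z) &
      (0 < 2 * (g%:Z + 1 - e%:Z - h%:Z) - 2 + e%:Z + n%:Z - #|A|%:Z)].

Definition UnivStab (g n : nat) (d : int) (m : family n) : Prop :=
  (forall e h A, ~~ inD g n e h A -> m e h A = 0) /\
  (forall e h A, inD g n e h A ->
     m e h A + m e (g + 1 - e - h)%N (~: A) = d + 1 - e%:Z) /\
  (forall e h A e' h' A' e'' h'' A'',
     inD g n e h A -> inD g n e' h' A' -> inD g n e'' h'' A'' ->
     A' :&: A'' = set0 -> A = A' :|: A'' ->
     2 * (h%:Z + 1 - h'%:Z - h''%:Z) = e'%:Z + e''%:Z - e%:Z ->
     (e < e' + e'')%N -> (e' < e + e'')%N -> (e'' < e + e')%N ->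
     0 <= (m e h A - h%:Z) - (m e' h' A' - h'%:Z) - (m e'' h'' A'' - h''%:Z)
       <= 1).

Definition opT (g n : nat) (j : 'I_n) (m : family n) : family n :=
  fun e h A =>
    if inD g n e h A then
      if has1 n A && (j \notin A) then m e h A + 1
      else if ~~ has1 n A && (j \in A) then m e h A - 1
      else m e h A
    else m e h A.

Definition opS (g n : nat) (m : family n) : family n :=
  fun e h A =>
    if inD g n e h A then
      if has1 n A then m e h A + (2 * g%:Z - 2 * h%:Z - e%:Z)
      else m e h A - (2 * h%:Z + e%:Z - 2)
    else m e h A.

Definition gen_step (g n : nat) (d : int) (m m' : family n) : Prop :=
  UnivStab g n d m /\ UnivStab g n d m' /\
  ((exists j : 'I_n, (1 <= val j)%N /\ m' = opT g n j m) \/ m' = opS g n m).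

Definition same_orbit (g n : nat) (d : int) : relation (family n) :=
  clos_refl_sym_trans (family n) (gen_step g n d).

Definition normalized (g n : nat) (m : family n) : Prop :=
  (0 <= m 2%N 0%N (set_one n) <= 2 * g%:Z - 3) /\
  (forall i : 'I_n, (1 <= val i)%N -> m 2%N 0%N [set i] = 0).

(* Main.v *)
Require Import Defs.
From mathcomp Require Import all_boot all_order all_algebra.
From mathcomp Require Import zify ring lra.
From Stdlib Require Import FunctionalExtensionality Relations.
Import Order.TTheory GRing.Theory Num.Theory.
Local Open Scope ring_scope.

Section S.
Variables (g n : nat) (d : int).

Definition bi (b : bool) : int := if b then 1 else 0.

Definition tr (phi m : Defs.family n) : Defs.family n :=
  fun e h A => if inD g n e h A then m e h A + phi e h A else m e h A.

Definition sp (c : 'I_n -> int) (b : int) : Defs.family n :=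
  fun e h A => \sum_(i in A) c i - b * (2 * h%:Z + e%:Z - 2).

Definition valid (c : 'I_n -> int) (b : int) : Prop :=
  \sum_i c i = b * (2 * g%:Z - 2).

Lemma inD_compl e h (A : {set 'I_n}) : inD g n e h A -> inD g n e (g + 1 - e - h)%N (~: A).
Proof.
rewrite /inD => /and4P[h1 h2 h3 h4].
have hc := cardsC A. rewrite card_ord in hc.
apply/and4P; split; try lia.
Qed.

Lemma sum_compl (c : 'I_n -> int) (A : {set 'I_n}) :
  \sum_(i in A) c i + \sum_(i in ~: A) c i = \sum_i c i.
Proof.
rewrite [RHS](eq_bigl (fun i => i \in [set: 'I_n])); last by move=> i; rewrite inE.
rewrite [RHS](big_setID A) /=.
have -> : [set: 'I_n] :&: A = A by rewrite setTI.
have -> : [set: 'I_n] :\: A = ~: A by rewrite setTD.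
by [].
Qed.

Lemma sum_disj (c : 'I_n -> int) (A' A'' : {set 'I_n}) :
  A' :&: A'' = set0 ->
  \sum_(i in A' :|: A'') c i = \sum_(i in A') c i + \sum_(i in A'') c i.
Proof.
move=> hd; rewrite (big_setID A') /=.
have -> : (A' :|: A'') :&: A' = A' by apply/setP => i; rewrite !inE; case: (i \in A') => //=; rewrite andbF.
have -> : (A' :|: A'') :\: A' = A''.
  apply/setP => i; rewrite !inE.
  case hi': (i \in A'); case hi'': (i \in A'') => //=.
  have : i \in A' :&: A'' by rewrite inE hi' hi''.
  by rewrite hd inE.
by [].
Qed.

Lemma tr_stab c b m : valid c b -> UnivStab g n d m -> UnivStab g n d (tr (sp c b) m).
Proof.
move=> hv [h0 [h1 h2]]; split; [|split].
- by move=> e h A hA; rewrite /tr (negPf hA); apply: h0.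
- move=> e h A hA; rewrite /tr hA (inD_compl _ _ _ hA).
  have := h1 _ _ _ hA.
  rewrite /sp.
  have := sum_compl c A. rewrite hv.
  move: hA; rewrite /inD => /and4P[q1 q2 _ _].
  have -> : ((g + 1 - e - h)%N%:Z) = g%:Z + 1 - e%:Z - h%:Z by lia.
  move=> hs hm.
  have -> : m e h A + (\sum_(i in A) c i - b * (2 * h%:Z + e%:Z - 2)) +
    (m e (g + 1 - e - h)%N (~: A) + (\sum_(i in ~: A) c i - b * (2 * (g%:Z + 1 - e%:Z - h%:Z) + e%:Z - 2)))
    = (m e h A + m e (g + 1 - e - h)%N (~: A)) + ((\sum_(i in A) c i + \sum_(i in ~: A) c i) - b * (2 * g%:Z - 2)) by ring.
  by rewrite hm hs subrr addr0.
- move=> e h A e' h' A' e'' h'' A'' hA hA' hA'' hd hU hh q1 q2 q3.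
  rewrite /tr hA hA' hA''.
  have := h2 _ _ _ _ _ _ _ _ _ hA hA' hA'' hd hU hh q1 q2 q3.
  rewrite /sp hU sum_disj //.
  set s1 := \sum_(i in A') c i; set s2 := \sum_(i in A'') c i.
  suff -> : m e h (A' :|: A'') + (s1 + s2 - b * (2 * h%:Z + e%:Z - 2)) - h%:Z -
    (m e' h' A' + (s1 - b * (2 * h'%:Z + e'%:Z - 2)) - h'%:Z) -
    (m e'' h'' A'' + (s2 - b * (2 * h''%:Z + e''%:Z - 2)) - h''%:Z) =
    m e h (A' :|: A'') - h%:Z - (m e' h' A' - h'%:Z) - (m e'' h'' A'' - h''%:Z) by [].
  have hz : 2 * h%:Z + e%:Z - 2 - (2 * h'%:Z + e'%:Z - 2) - (2 * h''%:Z + e''%:Z - 2) = 0 by lia.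
  transitivity (m e h (A' :|: A'') - h%:Z - (m e' h' A' - h'%:Z) - (m e'' h'' A'' - h''%:Z)
     - b * (2 * h%:Z + e%:Z - 2 - (2 * h'%:Z + e'%:Z - 2) - (2 * h''%:Z + e''%:Z - 2))); first ring.
  by rewrite hz mulr0 subr0.
Qed.


Lemma tr_comp phi psi m :
  tr psi (tr phi m) = tr (fun e h A => phi e h A + psi e h A) m.
Proof.
apply: functional_extensionality => e; apply: functional_extensionality => h;
apply: functional_extensionality => A; rewrite /tr; case: (inD g n e h A) => //.
by rewrite addrA.
Qed.

Lemma tr0 m : tr (fun _ _ _ => 0) m = m.
Proof.
apply: functional_extensionality => e; apply: functional_extensionality => h;
apply: functional_extensionality => A; rewrite /tr; case: (inD g n e h A) => //.
by rewrite addr0.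
Qed.

Lemma tr_inj phi m1 m2 : tr phi m1 = tr phi m2 -> m1 = m2.
Proof.
move=> E.
apply: functional_extensionality => e; apply: functional_extensionality => h;
apply: functional_extensionality => A.
have := congr1 (fun f => f e h A) E; rewrite /tr; case: (inD g n e h A) => //.
exact: addIr.
Qed.

Lemma sp_add c b c' b' :
  (fun e h A => sp c b e h A + sp c' b' e h A) = sp (fun i => c i + c' i) (b + b').
Proof.
apply: functional_extensionality => e; apply: functional_extensionality => h;
apply: functional_extensionality => A; rewrite /sp big_split /=; ring.
Qed.

Lemma sp0 : sp (fun _ => 0) 0 = (fun _ _ _ => 0).
Proof.
apply: functional_extensionality => e; apply: functional_extensionality => h;
apply: functional_extensionality => A; rewrite /sp big1 // mul0r subr0 //.
Qed.

Lemma sp_opp c b : (fun e h A => sp (fun i => - c i) (- b) e h A + sp c b e h A) = (fun _ _ _ => 0).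
Proof.
rewrite sp_add -sp0; congr sp; last by rewrite addNr.
by apply: functional_extensionality => i; rewrite addNr.
Qed.

Lemma valid_add c b c' b' : valid c b -> valid c' b' -> valid (fun i => c i + c' i) (b + b').
Proof. by rewrite /valid big_split /= => -> ->; ring. Qed.

Lemma valid_opp c b : valid c b -> valid (fun i => - c i) (- b).
Proof. by rewrite /valid sumrN => ->; ring. Qed.

Lemma valid_scale k c b : valid c b -> valid (fun i => k * c i) (k * b).
Proof. by rewrite /valid -mulr_sumr => ->; ring. Qed.

Lemma bij c b : valid c b -> forall m', UnivStab g n d m' ->
  exists! m, UnivStab g n d m /\ tr (sp c b) m = m'.
Proof.
move=> hv m' hm'; exists (tr (sp (fun i => - c i) (- b)) m'); split.
  split; first by apply: tr_stab; [exact: valid_opp | exact: hm'].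
  by rewrite tr_comp sp_opp tr0.
by move=> m [_ E]; apply: (@tr_inj (sp c b)); rewrite E tr_comp sp_opp tr0.
Qed.

Lemma sum_ind (A : {set 'I_n}) k : \sum_(i in A) bi (i == k) = bi (k \in A).
Proof.
case kA: (k \in A).
  rewrite (bigD1 k) //= eqxx big1 ?addr0 // => i /andP[_ /negPf ->] //.
rewrite big1 // => i iA.
have : i != k by apply: contraTneq iA => ->; rewrite kA.
by move/negPf => ->.
Qed.

Lemma sum_ind_all (k : 'I_n) : \sum_i bi (i == k) = 1.
Proof.
rewrite (bigD1 k) //= eqxx big1 ?addr0 // => i /negPf ->  //.
Qed.

Variable i0 : 'I_n.
Hypothesis hi0 : val i0 = 0%N.

Lemma has1E (A : {set 'I_n}) : has1 n A = (i0 \in A).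
Proof.
apply/existsP/idP.
  case=> i /andP[iA /eqP vi]; have -> : i0 = i by apply: val_inj; rewrite hi0 vi.
  exact: iA.
by move=> iA; exists i0; rewrite iA hi0.
Qed.

Definition cT (j : 'I_n) (i : 'I_n) : int := bi (i == i0) - bi (i == j).
Definition cS (i : 'I_n) : int := (2 * g%:Z - 2) * bi (i == i0).

Lemma validT j : valid (cT j) 0.
Proof. by rewrite /valid /cT sumrB !sum_ind_all subrr mul0r. Qed.

Lemma validS : valid cS 1.
Proof. by rewrite /valid /cS -mulr_sumr sum_ind_all mulr1 mul1r. Qed.

Lemma opTE (j : 'I_n) m : (1 <= val j)%N -> opT g n j m = tr (sp (cT j) 0) m.
Proof.
move=> hj.
have jn : j != i0 by apply/eqP => E; move: hj; rewrite E hi0.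
apply: functional_extensionality => e; apply: functional_extensionality => h;
apply: functional_extensionality => A.
rewrite /opT /tr /sp /cT; case: (inD g n e h A) => //.
rewrite sumrB !sum_ind mul0r subr0 has1E.
case: (i0 \in A); case jA: (j \in A) => /=; rewrite /bi /=; ring.
Qed.

Lemma opSE m : opS g n m = tr (sp cS 1) m.
Proof.
apply: functional_extensionality => e; apply: functional_extensionality => h;
apply: functional_extensionality => A.
rewrite /opS /tr /sp /cS; case: (inD g n e h A) => //.
rewrite -mulr_sumr !sum_ind has1E.
case: (i0 \in A); rewrite /bi /=; ring.
Qed.

Lemma sp_opp' c b : (fun e h A => sp c b e h A + sp (fun i => - c i) (- b) e h A) = (fun _ _ _ => 0).
Proof.
rewrite sp_add -sp0; congr sp; last by rewrite addrN.
by apply: functional_extensionality => i; rewrite addrN.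
Qed.

Lemma inv m1 m2 : same_orbit g n d m1 m2 ->
  exists c b, valid c b /\ m2 = tr (sp c b) m1.
Proof.
elim=> {m1 m2}.
- move=> x y [_ [_ [[j [hj ->]] | ->]]].
    by exists (cT j), 0; split; [exact: validT | exact: opTE].
  by exists cS, 1; split; [exact: validS | exact: opSE].
- move=> x; exists (fun _ => 0), 0; split; last by rewrite sp0 tr0.
  by rewrite /valid big1 // mul0r.
- move=> x y _ [c [b [hv ->]]]; exists (fun i => - c i), (- b); split.
    exact: valid_opp.
  by rewrite tr_comp sp_opp' tr0.
- move=> x y z _ [c [b [hv ->]]] _ [c' [b' [hv' ->]]].
  exists (fun i => c i + c' i), (b + b'); split; first exact: valid_add.
  by rewrite tr_comp sp_add.
Qed.

Definition R c b := forall m, UnivStab g n d m -> same_orbit g n d m (tr (sp c b) m).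

Lemma R_add c b c' b' : valid c b -> R c b -> R c' b' -> R (fun i => c i + c' i) (b + b').
Proof.
move=> hv r r' m hm.
apply: rst_trans (r m hm) _.
rewrite -sp_add -tr_comp; apply: r'; exact: tr_stab.
Qed.

Lemma R_nat c b : valid c b -> R c b -> forall k : nat, R (fun i => k%:Z * c i) (k%:Z * b).
Proof.
move=> hv r; elim=> [|k IH].
  have -> : (fun i => 0%:Z * c i) = (fun _ => 0).
    by apply: functional_extensionality => i; rewrite mul0r.
  by rewrite mul0r => m hm; rewrite sp0 tr0; apply: rst_refl.
have -> : (fun i => k.+1%:Z * c i) = (fun i => k%:Z * c i + c i).
  by apply: functional_extensionality => i; rewrite -[k.+1]addn1 PoszD mulrDl mul1r.
rewrite -[k.+1]addn1 PoszD mulrDl mul1r.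
apply: R_add => //; exact: valid_scale.
Qed.

Lemma R_int c b : valid c b -> R c b -> R (fun i => - c i) (- b) ->
  forall k : int, R (fun i => k * c i) (k * b).
Proof.
move=> hv r r' [k|k].
  exact: R_nat.
have -> : (fun i => Negz k * c i) = (fun i => k.+1%:Z * (- c i)).
  by apply: functional_extensionality => i; rewrite NegzE mulrN mulNr.
rewrite NegzE mulNr -mulrN.
apply: R_nat => //; exact: valid_opp.
Qed.

Lemma R_gen c b : valid c b ->
  (forall m, UnivStab g n d m -> UnivStab g n d (tr (sp c b) m) -> gen_step g n d m (tr (sp c b) m)) ->
  R c b /\ R (fun i => - c i) (- b).
Proof.
move=> hv hs; split.
  move=> m hm; apply: rst_step; apply: hs => //; exact: tr_stab.
move=> m hm; apply: rst_sym.
have hm' : UnivStab g n d (tr (sp (fun i => - c i) (- b)) m).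
  by apply: tr_stab => //; exact: valid_opp.
have := hs _ hm'.
rewrite tr_comp sp_opp tr0 => H; apply: rst_step; exact: H.
Qed.

Lemma RT j : (1 <= val j)%N -> R (cT j) 0 /\ R (fun i => - cT j i) (- 0).
Proof.
move=> hj; apply: R_gen; first exact: validT.
move=> m hm hm'; split; [done | split; [done | left]].
by exists j; split => //; rewrite opTE.
Qed.

Lemma RS : R cS 1 /\ R (fun i => - cS i) (- 1).
Proof.
apply: R_gen; first exact: validS.
move=> m hm hm'; split; [done | split; [done | right]].
by rewrite opSE.
Qed.

Lemma reach_list (s : seq 'I_n) : forall c b, valid c b ->
  (forall i, i != i0 -> i \notin s -> c i = 0) -> R c b.
Proof.
elim: s => [|j s IH] c b hv hs.
  have Ec : c = (fun i => b * cS i).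
    apply: functional_extensionality => i; rewrite /cS.
    case: (eqVneq i i0) => [->|ne].
      have : \sum_i c i = c i0.
        rewrite (bigD1 i0) //= big1 ?addr0 // => k hk; exact: hs.
      rewrite hv => <-; rewrite /bi ?eqxx; ring.
    rewrite hs // /bi; case: eqP ne => // _ _; ring.
  rewrite Ec; have [r1 r2] := RS.
  have := R_int _ _ validS r1 r2 b; rewrite mulr1; exact.
case: (eqVneq j i0) => [ji|jn].
  apply: IH => // i hi hin; apply: hs => //.
  by rewrite inE negb_or hin andbT; rewrite ji.
have hj : (1 <= val j)%N.
  by rewrite lt0n; apply/eqP => E; move/eqP: jn; apply; apply: val_inj; rewrite /= E hi0.
set c' := fun i => c i + c j * cT j i.
have hv' : valid c' b.
  have := valid_add _ _ _ _ hv (valid_scale (c j) _ _ (validT j)); rewrite mulr0 addr0; exact.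
have r' : R c' b.
  apply: IH => // i hi hin; rewrite /c' /cT /=.
  case: (eqVneq i j) => [->|ij].
    by rewrite /bi (negPf jn) /=; ring.
  rewrite hs //; last by rewrite inE negb_or ij.
  by rewrite /bi ?(negPf hi) ?(negPf ij) /=; ring.
have [r1 r2] := RT _ hj.
have r3 := R_int _ _ (validT j) r1 r2 (- c j).
have := R_add _ _ _ _ hv' r' r3.
have -> : (fun i => c' i + - c j * cT j i) = c.
  by apply: functional_extensionality => i; rewrite /c'; ring.
by rewrite mulr0 addr0.
Qed.

Lemma reach c b : valid c b -> R c b.
Proof.
move=> hv; apply: (reach_list (enum 'I_n)) => // i _; by rewrite mem_enum.
Qed.

End S.

Lemma inD_single (g n : nat) (k : 'I_n) : (2 <= g)%N -> inD g n 2 0 [set k].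
Proof. move=> hg; rewrite /inD cards1; have := ltn_ord k; lia. Qed.

Lemma tr_single g n (c : 'I_n -> int) b m k : (2 <= g)%N ->
  tr g n (sp n c b) m 2 0 [set k] = m 2%N 0%N [set k] + c k.
Proof.
move=> hg; rewrite /tr inD_single // /sp big_set1; ring.
Qed.

Theorem mainTheorem8 (g n : nat) (d : int) :
  (2 <= g)%N -> (1 <= n)%N ->
  (forall j : 'I_n, (1 <= val j)%N ->
     (forall m, UnivStab g n d m -> UnivStab g n d (opT g n j m)) /\
     (forall m', UnivStab g n d m' ->
        exists! m, UnivStab g n d m /\ opT g n j m = m')) /\
  ((forall m, UnivStab g n d m -> UnivStab g n d (opS g n m)) /\
   (forall m', UnivStab g n d m' ->
      exists! m, UnivStab g n d m /\ opS g n m = m')) /\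
  (forall m, UnivStab g n d m ->
     exists! m', [/\ UnivStab g n d m', normalized g n m' & same_orbit g n d m m']).
Proof.
move=> hg hn.
pose i0 : 'I_n := Ordinal hn.
have hi0 : val i0 = 0%N by [].
split; [|split; [split|]].
- move=> j hj; split.
    by move=> m hm; rewrite (opTE _ _ _ hi0 j m hj); apply: tr_stab => //; exact: validT.
  move=> m' hm'; have [m [[hm E] U]] := bij _ _ d _ _ (validT g n i0 j) _ hm'.
  exists m; split; first by rewrite (opTE _ _ _ hi0 j m hj).
  by move=> x [hx Ex]; apply: U; rewrite -(opTE _ _ _ hi0 j x hj).
- by move=> m hm; rewrite (opSE _ _ _ hi0 m); apply: tr_stab => //; exact: validS.
- move=> m' hm'; have [m [[hm E] U]] := bij _ _ d _ _ (validS g n i0) _ hm'.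
  exists m; split; first by rewrite (opSE _ _ _ hi0 m).
  by move=> x [hx Ex]; apply: U; rewrite -(opSE _ _ _ hi0 x).
move=> m hm.
have so1 : set_one n = [set i0].
  by apply/setP => i; rewrite !inE; apply/eqP/eqP => [E|->] //; apply: val_inj.
pose x (i : 'I_n) := m 2%N 0%N [set i].
pose X := \sum_(i | i != i0) x i.
pose D : int := 2 * g%:Z - 2.
have hD : 0 < D by rewrite /D; lia.
pose q := ((x i0 + X) %/ D)%Z.
pose r := ((x i0 + X) %% D)%Z.
have hr0 : 0 <= r by apply: modz_ge0; rewrite gt_eqF.
have hr1 : r < D by apply: ltz_pmod.
have hqr := divz_eq (x i0 + X) D.
pose c (i : 'I_n) := if i == i0 then r - x i0 else - x i.
pose b := - q.
have hv : valid g n c b.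
  rewrite /valid (bigD1 i0) //= /c eqxx.
  rewrite (eq_bigr (fun i => - x i)); last by move=> i /negPf ->.
  rewrite sumrN -/X -/D -/q -/r /b.
  move: hqr; rewrite -/q -/r => hqr. lia.
pose m' := tr g n (sp n c b) m.
have hm' : UnivStab g n d m' by apply: tr_stab.
have nm' : normalized g n m'.
  split.
    rewrite so1 /m' tr_single // /c eqxx.
    have -> : m 2%N 0%N [set i0] + (r - x i0) = r by rewrite /x; ring.
    apply/andP; split => //; rewrite -/D; lia.
  move=> i hi; rewrite /m' tr_single // /c.
  have -> : (i == i0) = false.
    by apply/negbTE/eqP => E; move: hi; rewrite E.
  by rewrite /x addrN.
exists m'; split.
  split => //; exact: (reach _ _ d _ hi0 _ _ hv).
move=> m'' [hm'' nm'' so''].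
have so : same_orbit g n d m' m''.
  apply: rst_trans so''; apply: rst_sym; exact: (reach _ _ d _ hi0 _ _ hv).
have [c2 [b2 [hv2 E2]]] := inv _ _ _ _ hi0 _ _ so.
have zc : forall k : 'I_n, k != i0 -> c2 k = 0.
  move=> k hk.
  have hk1 : (1 <= val k)%N by rewrite lt0n; apply/eqP => E; move/eqP: hk; apply; apply: val_inj.
  have := nm''.2 k hk1; have := nm'.2 k hk1.
  rewrite E2 tr_single // => ->; rewrite add0r //.
have hs : \sum_i c2 i = c2 i0.
  by rewrite (bigD1 i0) //= big1 ?addr0 // => k; exact: zc.
move: hv2; rewrite /valid hs => hc.
have /andP[a1 a2] := nm'.1; have /andP[a3 a4] := nm''.1.
move: a3 a4; rewrite E2 so1 tr_single // -so1 => a3 a4.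
have hb : b2 = 0.
  move: a1 a2 a3 a4; set y := m' 2%N 0%N (set_one n) => a1 a2 a3 a4.
  nia.
have hc0 : c2 = (fun _ => 0).
  apply: functional_extensionality => k; case: (eqVneq k i0) => [->|hk].
    by rewrite hc hb mul0r.
  exact: zc.
by rewrite hc0 hb sp0 tr0.
Qed.
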